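(* Let $a,b,c\in\mathbb{R}$ with $b\neq 0$ and write $-a/b=2n+3$. Any linear Hopf sphere $\mathcal{S}$ satisfying $0=ar_1+br_2+c$ has astigmatism of the form $s=C_0\sin^{2n+2}\theta$ and support function of the form $$r=C_2\cos\theta+C_1+C_0\left[\frac{\sin^{2n+2}\theta}{2n+2}-\cos\theta\int_0^\theta\sin^{2n+1}\vartheta\,d\vartheta\right],$$ for constants $C_0,C_1,C_2$.
   Context: $\mathscr{W}$ is the set of embedded $C^2$-smooth topological 2-spheres in $\mathbb{R}^3$ that are rotationally symmetric and strictly convex. A surface in $\mathscr{W}$ is parametrised by the inverse Gauss map with $\theta\in[0,\pi]$ the angle between the outward normal and the symmetry axis. The support function is $r(\theta)=\vec X\cdot\hat n$, the radii of curvature are $r_1=\frac{\cos^2\theta}{\sin\theta}\frac{d}{d\theta}\left(\frac{r}{\cos\theta}\right)$, $r_2=r''+r$, and the astigmatism is $s=r_2-r_1$. A linear Hopf sphere (for $a,b,c$) is a surface in $\mathscr{W}$ on which $ar_1+br_2+c=0$ holds identically. *)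

(* Defs.v *)
From HB Require Import structures.
From mathcomp Require Import all_boot all_order all_algebra.
From mathcomp Require Import all_classical all_reals all_analysis.
Set Implicit Arguments. Unset Strict Implicit. Unset Printing Implicit Defensive.
Import Order.TTheory GRing.Theory Num.Theory.
Import numFieldNormedType.Exports.
Local Open Scope classical_set_scope.
Local Open Scope ring_scope.

Section Hopf.
Variable R : realType.
Implicit Types (r : R -> R) (t : R).

(* Radius of curvature r1 = cos^2 t / sin t * d/dt (r / cos t),
   written out as r + r' cos t / sin t (valid for 0 < t < pi). *)
Definition radius1 r t : R := r t + derive1 r t * cos t / sin t.

Definition radius2 r t : R := derive1 (derive1 r) t + r t.

Definition astigmatism r t : R := radius2 r t - radius1 r t.

(* Support functions (of the polar angle t in [0,pi]) of surfaces in W: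
   C^2 across [0,pi] (the support function extends evenly across the poles),
   regular at the poles (r'(0) = r'(pi) = 0), strictly convex
   (positive radii of curvature). *)
Definition in_W r : Prop :=
  [/\ (forall t, 0 <= t <= pi ->
         [/\ derivable r t 1, derivable (derive1 r) t 1 &
             {for t, continuous (derive1 (derive1 r))}]),
      derive1 r 0 = 0, derive1 r pi = 0,
      (forall t, 0 < t < pi -> 0 < radius1 r t) &
      (forall t, 0 <= t <= pi -> 0 < radius2 r t)].

Definition linear_hopf (a b c : R) r : Prop :=
  in_W r /\ forall t, 0 < t < pi -> a * radius1 r t + b * radius2 r t + c = 0.

End Hopf.

(* Main.v *)
Require Import Defs.
From HB Require Import structures.
From mathcomp Require Import all_boot all_order all_algebra.
From mathcomp Require Import all_classical all_reals all_analysis.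
From mathcomp Require Import measurable_realfun lra ring.
Import Order.TTheory GRing.Theory Num.Theory.
Import numFieldNormedType.Exports.
Local Open Scope classical_set_scope.
Local Open Scope ring_scope.

Section S.

Variable R : realType.
Local Notation mu := (@lebesgue_measure R).

Lemma dnbhs_shift (f : R -> R) (a : R) : f @ a^' = (fun h => f (h + a)) @ 0^'.
Proof.
rewrite funeqE => A /=; rewrite propeqE.
have := near_shift 0 a (fun y => y != a -> A (f y)).
rewrite subr0 => E; split => H.
- have H' : \forall x \near a, x != a -> A (f x) := H.
  rewrite E in H'.
  suff : \forall z \near 0, z != 0 -> A (f (z + a)) by [].
  apply: filter_app H'; near=> z => /= H1 z0; apply: H1.
  by rewrite -subr_eq0 addrK.
- have H' : \forall z \near 0, z != 0 -> A (f (z + a)) := H.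
  suff : \forall x \near a, x != a -> A (f x) by [].
  rewrite E; apply: filter_app H'; near=> z => /= H1 z0; apply: H1.
  by rewrite -(subr_eq0 (z + a)) addrK in z0.
Unshelve. all: by end_near. Qed.
Lemma ratio_cvg (f g : R -> R) a : f a = 0 -> g a = 0 -> derivable f a 1 ->
  derivable g a 1 -> 'D_1 g a != 0 ->
  (fun x => f x / g x) @ a^' --> 'D_1 f a / 'D_1 g a.
Proof.
move=> fa ga df dg dg0.
rewrite dnbhs_shift.
have Hf : (fun h => h^-1 *: ((f \o shift a) (h *: 1) - f a)) @ 0^' --> 'D_1 f a := df.
have Hg : (fun h => h^-1 *: ((g \o shift a) (h *: 1) - g a)) @ 0^' --> 'D_1 g a := dg.
apply: cvg_trans (cvgM Hf (cvgV dg0 Hg)).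
apply: near_eq_cvg; near=> h.
have h0 : h != 0 by near: h; exact: nbhs_dnbhs_neq.
rewrite /= fa ga !subr0 /GRing.scale /= !mulr1 invfM invrK.
by rewrite mulrCA !mulrA mulfV // mul1r.
Unshelve. all: by end_near. Qed.



Lemma improper_FTC (f H : R -> R) (a b la lb : R) : a < b ->
  (forall x, a < x < b -> 0 <= f x) ->
  (forall x, a < x < b -> {for x, continuous f}) ->
  (forall x, a < x < b -> is_derive x 1 H (f x)) ->
  H x @[x --> a^'+] --> la -> H x @[x --> b^'-] --> lb ->
  (\int[mu]_(x in `[a, b]) (f x)%:E = (lb - la)%:E)%E.
Proof.
move=> ab f0 cf dH Ha Hb.
pose d := (b - a) / 2.
have d2 : d * 2 = b - a by rewrite /d mulfVK.
have d0 : 0 < d by lra.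
pose e (k : nat) := d * (k.+2%:R)^-1.
have e0 k : 0 < e k by rewrite /e divr_gt0 // ltr0n.
have e_lt k : e k < d.
  rewrite /e ltr_pdivrMr ?ltr0n // ltr_pMr // ltr1n //.
have e_nd (i j : nat) : (i <= j)%N -> e j <= e i.
  move=> ij; rewrite /e ler_pM2l // lef_pV2 ?posrE ?ltr0n // ler_nat ltnS ltnS //.
have ecvg : e k @[k --> \oo] --> 0.
  have h1 : [sequence (@harmonic R) n.+1]_n @ \oo --> 0 by rewrite cvg_shiftS; exact: cvg_harmonic.
  have h2 : (fun k : nat => d * (@harmonic R) k.+1) @ \oo --> d * 0.
    exact: (@cvgM _ _ _ _ (fun _ => d) _ d 0 (cvg_cst d) h1).
  by rewrite mulr0 in h2.
have aeb k : a + e k < b - e k by have := e_lt k; lra.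
have inab x k : a + e k <= x <= b - e k -> a < x < b.
  by move=> /andP[h1 h2]; have := e0 k => h3; apply/andP; split; lra.
have mfR : measurable_fun `]a, b[ f.
  apply: open_continuous_measurable_fun => // x.
  by rewrite inE /= in_itv /= => /cf.
have mf : measurable_fun `]a, b[ (EFin \o f) by exact/measurable_EFinP.
pose F k : set R := [set` `[a + e k, b - e k]].
have FE k : (\int[mu]_(x in F k) (f x)%:E = (H (b - e k) - H (a + e k))%:E)%E.
  have ek := e0 k; have ek' := e_lt k.
  apply: continuous_FTC2 (aeb k) _ _ _.
  - apply: continuous_in_subspaceT => x; rewrite inE /= in_itv /= => /inab; exact: cf.
  - split.
    + move=> x; rewrite in_itv /= => /andP[h1 h2].
      have /dH [] // : a < x < b by apply: (inab x k); apply/andP; split; lra.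
    + apply: cvg_at_right_filter.
      have /dH [h _] : a < a + e k < b by apply/andP; split; lra.
      exact/differentiable_continuous/derivable1_diffP.
    + apply: cvg_at_left_filter.
      have /dH [h _] : a < b - e k < b by apply/andP; split; lra.
      exact/differentiable_continuous/derivable1_diffP.
  - move=> x; rewrite in_itv /= => /andP[h1 h2].
    have /dH [_ h] : a < x < b by apply: (inab x k); apply/andP; split; lra.
    by rewrite derive1E.
have FU : \bigcup_k F k = [set` `]a, b[].
  apply/seteqP; split => x /=.
  - move=> [k _]; rewrite /F /= !in_itv /= => /andP[h1 h2].
    by have := e0 k => ?; apply/andP; split; lra.
  - rewrite in_itv /= => /andP[h1 h2].
    have dpos : 0 < Num.min (x - a) (b - x) by rewrite lt_min !subr_gt0 h1 h2.
    have /cvgrPdist_lt /(_ _ dpos) := ecvg.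
    move=> [N _ HN]; exists N => //.
    have := HN N (leqnn N); rewrite sub0r normrN ger0_norm ?(ltW (e0 N)) //.
    rewrite lt_min => /andP[h3 h4].
    by rewrite /F /= in_itv /=; apply/andP; split; lra.
have nd : nondecreasing_seq F.
  apply/nondecreasing_seqP => k; rewrite subsetEset => x.
  rewrite /F /= !in_itv /= => /andP[h1 h2].
  by have := e_nd k k.+1 (leqnSn k) => ?; apply/andP; split; lra.
have mF k : measurable (F k) by exact: measurable_itv.
have mfF k : measurable_fun (F k) (EFin \o f).
  apply: measurable_funS mf => //= x; rewrite /F /= !in_itv /= => /andP[h1 h2].
  by have := e0 k => ?; apply/andP; split; lra.
have f0F k x : F k x -> (0 <= (EFin \o f) x)%E.
  rewrite /F /= in_itv /= lee_fin => hx; apply: f0; exact: (inab x k).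
have L0 := ge0_nondecreasing_set_cvg_integral nd mF mfF f0F (mu := mu).
rewrite FU in L0.
have Haseq : H (a + e k) @[k --> \oo] --> la.
  apply: ((cvg_at_rightP H a la).1 Ha (fun k => a + e k)); split.
    by move=> k; rewrite ltrDl.
  by have H1 := cvgD (cvg_cst a) ecvg; rewrite addr0 in H1; exact: H1.
have Hbseq : H (b - e k) @[k --> \oo] --> lb.
  apply: ((cvg_at_leftP H b lb).1 Hb (fun k => b - e k)); split.
    by move=> k; rewrite gtrDl oppr_lt0.
  by have H1 := cvgB (cvg_cst b) ecvg; rewrite subr0 in H1; exact: H1.
have L1 : (fun i => \int[mu]_(x in F i) (EFin \o f) x)%E @ \oo --> (lb - la)%:E.
  rewrite (_ : (fun i => _) = (fun k => (H (b - e k) - H (a + e k))%:E)); last first.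
    by apply/funext => k; exact: FE.
  apply: cvg_EFin; first exact: nearW.
  exact: cvgB Hbseq Haseq.
rewrite -integral_itv_obnd_cbnd; last first.
  by apply/measurable_EFinP/measurable_fun_itv_bndo_bndcP.
rewrite -integral_itv_bndo_bndc //.
exact: (cvg_unique _ L0 L1).
Qed.

End S.

Section S2.

Variable R : realType.

Lemma dnbhs_at_right (f : R -> R) (a l : R) : f x @[x --> a^'] --> l -> f x @[x --> a^'+] --> l.
Proof.
move=> H; apply: cvg_trans H; apply: cvg_fmap2; apply: within_subset => x /=.
by move=> ax; rewrite gt_eqF.
Qed.

Lemma dnbhs_at_left (f : R -> R) (a l : R) : f x @[x --> a^'] --> l -> f x @[x --> a^'-] --> l.
Proof.
move=> H; apply: cvg_trans H; apply: cvg_fmap2; apply: within_subset => x /=.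
by move=> ax; rewrite lt_eqF.
Qed.

Lemma eq_at_right (f g : R -> R) a b l : a < b -> {for a, continuous f} ->
  g x @[x --> a^'+] --> l -> (forall x, a < x < b -> f x = g x) -> f a = l.
Proof.
move=> ab cf gl fg.
have h1 : f x @[x --> a^'+] --> f a by exact: cvg_at_right_filter.
have h2 : f x @[x --> a^'+] --> l.
  apply: cvg_trans gl; apply: near_eq_cvg; near=> x.
  apply/esym/fg; apply/andP; split.
    by near: x; exact: nbhs_right_gt.
  by near: x; exact: nbhs_right_lt.
exact: (cvg_unique _ h1 h2).
Unshelve. all: by end_near. Qed.

Lemma eq_at_left (f g : R -> R) a b l : a < b -> {for b, continuous f} ->
  g x @[x --> b^'-] --> l -> (forall x, a < x < b -> f x = g x) -> f b = l.
Proof.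
move=> ab cf gl fg.
have h1 : f x @[x --> b^'-] --> f b by exact: cvg_at_left_filter.
have h2 : f x @[x --> b^'-] --> l.
  apply: cvg_trans gl; apply: near_eq_cvg; near=> x.
  apply/esym/fg; apply/andP; split.
    by near: x; exact: nbhs_left_gt.
  by near: x; exact: nbhs_left_lt.
exact: (cvg_unique _ h1 h2).
Unshelve. all: by end_near. Qed.

Lemma deriv0_cst (f : R -> R) (a b : R) : (forall x, a < x < b -> is_derive x 1 f 0) ->
  forall x y, a < x < b -> a < y < b -> f x = f y.
Proof.
move=> df.
suff H : forall x y, a < x < b -> a < y < b -> x < y -> f x = f y.
  move=> x y hx hy; have [xy|yx|->] := ltgtP x y; [exact: H|exact/esym/H|by []].
move=> x y /andP[ax xb] /andP[ay yb] xy.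
have [| |c _ ] := @MVT R f (fun _ => 0) x y xy.
- move=> z; rewrite in_itv /= => /andP[h1 h2]; apply: df; apply/andP; split; lra.
- apply: derivable_within_continuous => z; rewrite in_itv /= => /andP[h1 h2].
  have /df [] // : a < z < b by apply/andP; split; lra.
- by rewrite mul0r => /eqP; rewrite subr_eq0 => /eqP.
Qed.
End S2.

Theorem proposition3p1 (R : realType) (a b c n : R) (r : R -> R) :
  b != 0 -> - a / b = 2 * n + 3 -> linear_hopf a b c r ->
  exists C0 C1 C2 : R,
    (forall t, 0 < t < pi ->
       astigmatism r t = C0 * (sin t `^ (2 * n + 2))) /\
    (forall t, 0 <= t <= pi ->
       r t = C2 * cos t + C1
             + C0 * (sin t `^ (2 * n + 2) / (2 * n + 2)
                     - cos t * Rintegral lebesgue_measure `[0, t]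
                                 (fun v => sin v `^ (2 * n + 1)))).
Proof.
move=> b0 hab [[hreg r'0 r'pi r1pos r2pos] heq].
pose m := 2 * n + 2.
have ha : a = - ((2 * n + 3) * b) by rewrite -hab divfK // opprK.
have pi0 : 0 < pi :> R := pi_gt0 R.
have sinp (t : R) : 0 < t < pi -> 0 < sin t := @sin_gt0_pi R t.
have sinn (t : R) : 0 < t < pi -> sin t != 0.
  move=> ht; have := sinp t ht; rewrite lt0r => /andP[] //.
pose w t := derive1 r t / sin t.
have sE (t : R) : astigmatism r t = derive1 (derive1 r) t - w t * cos t.
  by rewrite /astigmatism /radius2 /radius1 /w; ring.
have r1E (t : R) : radius1 r t = r t + w t * cos t.
  by rewrite /radius1 /w; ring.
have hs (t : R) : 0 < t < pi -> astigmatism r t = m * radius1 r t - c / b.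
  move=> ht; have := heq t ht; rewrite ha => /eqP.
  rewrite addrC addr_eq0 => /eqP ->.
  by rewrite /astigmatism /m; field.
have dr (t : R) : 0 <= t <= pi -> is_derive t 1 r (derive1 r t).
  by move=> /hreg [h _ _]; rewrite derive1E; exact: derivableP.
have dr' (t : R) : 0 <= t <= pi -> is_derive t 1 (derive1 r) (derive1 (derive1 r) t).
  by move=> /hreg [_ h _]; rewrite derive1E; exact: derivableP.
have inc (t : R) : 0 < t < pi -> 0 <= t <= pi by move=> /andP[h1 h2]; rewrite !ltW.
have dw (t : R) : 0 < t < pi -> is_derive t 1 w (astigmatism r t / sin t).
  move=> ht.
  have H := is_deriveM (dr' t (inc t ht)) (is_deriveV (sinn t ht) (is_derive_sin t)).
  rewrite (_ : w = derive1 r * (fun y => (sin y)^-1)); last by apply/funext.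
  apply: (is_derive_eq H); rewrite sE /w /GRing.scale /=.
  by field; rewrite sinn.
have dr1 (t : R) : 0 < t < pi -> is_derive t 1 (radius1 r) (astigmatism r t * cos t / sin t).
  move=> ht.
  have H := is_deriveD (dr t (inc t ht)) (is_deriveM (dw t ht) (is_derive_cos t)).
  rewrite (_ : radius1 r = r + w * cos); last by apply/funext => x; rewrite r1E.
  apply: (is_derive_eq H); rewrite /GRing.scale /= sE /w.
  by field; rewrite sinn.
pose S (t : R) := sin t `^ m.
have Sp (t : R) : 0 < t < pi -> 0 < S t by move=> ht; rewrite /S powR_gt0 // sinp.
have Sn (t : R) : 0 < t < pi -> S t != 0 by move=> ht; rewrite gt_eqF // Sp.
have dS (t : R) : 0 < t < pi -> is_derive t 1 S (m * S t / sin t * cos t).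
  move=> ht.
  have H := is_derive1_comp (is_derive1_powR m (sinp t ht)) (is_derive_sin t).
  apply: (is_derive_eq H).
  rewrite powRB; last by rewrite sinn // implybT.
  by rewrite powRr1 ?ltW ?sinp // /S mulrA.
pose q (t : R) := (m * radius1 r t - c / b) / S t.
have dq (t : R) : 0 < t < pi -> is_derive t 1 q 0.
  move=> ht.
  have H1 := is_deriveB (is_deriveZ m (dr1 t ht)) (is_derive_cst (c / b) t 1).
  have H := is_deriveM H1 (is_deriveV (Sn t ht) (dS t ht)).
  rewrite (_ : q = (m \*: radius1 r - cst (c / b)) * (fun y => (S y)^-1)); last by apply/funext.
  apply: (is_derive_eq H); rewrite /GRing.scale /= hs //.
  rewrite (_ : (m \*: radius1 r - cst (c / b)) t = m * radius1 r t - c / b) //.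
  by field; rewrite sinn // b0 Sn.
have qc (t : R) : 0 < t < pi -> q t = q (pi / 2).
  move=> ht; apply: (@deriv0_cst R q 0 pi dq t (pi / 2) ht).
  have := pi0 => ?.
  by apply/andP; split; lra.
have [C0 hsC] : exists C0 : R, forall t : R, 0 < t < pi -> astigmatism r t = C0 * S t.
  exists (q (pi / 2)) => t ht; rewrite -(qc t ht) /q hs // divfK //; exact: Sn.
have h0 : 0 <= (0:R) <= pi by apply/andP; split; [exact: lexx | exact: ltW].
have hpi : 0 <= (pi:R) <= (pi:R) by rewrite (ltW pi0) lexx.
have ds0 : 'D_1 sin (0:R) = cos 0 by have [_ ->] := is_derive_sin (0:R).
have dspi : 'D_1 sin (pi:R) = cos pi by have [_ ->] := is_derive_sin (pi:R).
have W0lim : w x @[x --> 0^'+] --> derive1 (derive1 r) 0.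
  have [_ dr'0 _] := hreg 0 h0.
  have H := @ratio_cvg R (derive1 r) sin 0 r'0 (sin0 R) dr'0 (@derivable_sin R 0).
  rewrite ds0 cos0 oner_eq0 divr1 -derive1E in H.
  exact: (@dnbhs_at_right R _ _ _ (H isT)).
have Wpilim : w x @[x --> pi^'-] --> - derive1 (derive1 r) pi.
  have [_ dr'pi _] := hreg pi hpi.
  have H := @ratio_cvg R (derive1 r) sin pi r'pi (sinpi R) dr'pi (@derivable_sin R pi).
  rewrite dspi cospi invrN1 mulrN1 -derive1E in H.
  apply: (@dnbhs_at_left R _ _ _ (H _)).
  by rewrite oppr_eq0 oner_eq0.
have sfun : astigmatism r = fun t => derive1 (derive1 r) t - w t * cos t.
  by apply/funext => x; exact: sE.
have slim0 : astigmatism r x @[x --> 0^'+] --> 0.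
  rewrite sfun; have [_ _ c0] := hreg 0 h0.
  have h1 : derive1 (derive1 r) x @[x --> 0^'+] --> derive1 (derive1 r) 0.
    exact: cvg_at_right_filter c0.
  have h2 : cos x @[x --> (0:R)^'+] --> cos (0:R) by apply: cvg_at_right_filter; exact: continuous_cos.
  have H := cvgB h1 (cvgM W0lim h2); rewrite cos0 mulr1 subrr in H; exact: H.
have slimpi : astigmatism r x @[x --> pi^'-] --> 0.
  rewrite sfun; have [_ _ c0] := hreg pi hpi.
  have h1 : derive1 (derive1 r) x @[x --> pi^'-] --> derive1 (derive1 r) pi.
    exact: cvg_at_left_filter c0.
  have h2 : cos x @[x --> (pi:R)^'-] --> cos (pi:R) by apply: cvg_at_left_filter; exact: continuous_cos.
  have H := cvgB h1 (cvgM Wpilim h2); rewrite cospi mulrN1 opprK subrr in H; exact: H.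
have cr (t : R) : 0 <= t <= pi -> {for t, continuous r}.
  by move=> /hreg [h _ _]; exact/differentiable_continuous/derivable1_diffP.
have p2 : 0 < (pi:R) / 2 < (pi:R) by apply/andP; split; lra.
have interior (t : R) : 0 <= t <= pi -> t != 0 -> t != pi -> 0 < t < pi.
  move=> /andP[t0 tpi] tn0 tnpi; apply/andP; split.
    by rewrite lt_def tn0 t0.
  by rewrite lt_def eq_sym tnpi tpi.
case: (eqVneq C0 0) => [C00|C0n0].
  have hs0 (t : R) : 0 < t < pi -> astigmatism r t = 0.
    by move=> ht; rewrite hsC // C00 mul0r.
  have dr10 (t : R) : 0 < t < pi -> is_derive t 1 (radius1 r) 0.
    by move=> ht; apply: (is_derive_eq (dr1 t ht)); rewrite hs0 // !mul0r.
  have dw0 (t : R) : 0 < t < pi -> is_derive t 1 w 0.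
    by move=> ht; apply: (is_derive_eq (dw t ht)); rewrite hs0 // mul0r.
  pose K1 := radius1 r (pi / 2); pose K2 := w (pi / 2).
  have K1c (t : R) : 0 < t < pi -> radius1 r t = K1.
    by move=> ht; exact: (@deriv0_cst R _ 0 pi dr10 t (pi / 2) ht p2).
  have K2c (t : R) : 0 < t < pi -> w t = K2.
    by move=> ht; exact: (@deriv0_cst R _ 0 pi dw0 t (pi / 2) ht p2).
  have rI (t : R) : 0 < t < pi -> r t = K1 - K2 * cos t.
    by move=> ht; rewrite -(K1c t ht) -(K2c t ht) r1E addrK.
  exists 0, K1, (- K2); split.
    by move=> t ht; rewrite hs0 // mul0r.
  move=> t ht; rewrite mul0r addr0.
  have gc (y : R) : K1 - K2 * cos x @[x --> y] --> K1 - K2 * cos y.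
    by apply: cvgB; [exact: cvg_cst | apply: cvgM; [exact: cvg_cst | exact: continuous_cos]].
  case: (eqVneq t 0) => [-> | tn0].
    rewrite (@eq_at_right R r (fun x => K1 - K2 * cos x) 0 pi (K1 - K2 * cos 0) pi0
      (cr 0 h0) (cvg_at_right_filter (gc 0)) rI).
    by rewrite addrC mulNr.
  case: (eqVneq t pi) => [-> | tnpi].
    rewrite (@eq_at_left R r (fun x => K1 - K2 * cos x) 0 pi (K1 - K2 * cos pi) pi0
      (cr pi hpi) (cvg_at_left_filter (gc pi)) rI).
    by rewrite addrC mulNr.
  by rewrite rI ?interior // addrC mulNr.
have m0 : 0 < m.
  rewrite ltNge; apply/negP => mle0.
  have hge (t : R) : 0 < t < pi -> `|C0| <= `|astigmatism r t|.
    move=> ht; rewrite hsC // normrM; apply: ler_peMr => //.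
    rewrite ger0_norm; last exact: ltW (Sp t ht).
    rewrite /S /powR gt_eqF ?sinp //.
    apply: le_trans (expR_ge1Dx _); rewrite lerDl.
    exact: mulr_le0 mle0 (ln_le0 (sin_le1 t)).
  have : \forall x \near (0:R)^'+, (0 < x < pi) && (`|0 - astigmatism r x| < `|C0|).
    near=> x; apply/andP; split.
      apply/andP; split; near: x; [exact: nbhs_right_gt | exact: nbhs_right_lt].
    by near: x; move/cvgrPdist_lt : slim0; apply; rewrite normr_gt0.
  move=> /filter_ex [t /andP[ht hlt]].
  have := hge t ht; rewrite sub0r normrN in hlt.
  by rewrite leNgt hlt.
have mn0 : m != 0 by rewrite gt_eqF.
pose W0 := derive1 (derive1 r) 0.
pose Wpi := - derive1 (derive1 r) pi.
have S1 (t : R) : 0 < t < pi -> S t / sin t = sin t `^ (2 * n + 1).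
  move=> ht; rewrite (_ : 2 * n + 1 = m - 1); last by rewrite /m; ring.
  rewrite powRB; last by rewrite sinn // implybT.
  by rewrite powRr1 // ltW // sinp.
have dH (t : R) : 0 < t < pi -> is_derive t 1 (fun x => C0^-1 * w x) (sin t `^ (2 * n + 1)).
  move=> ht; have H := is_deriveZ C0^-1 (dw t ht).
  apply: (is_derive_eq H); rewrite /GRing.scale /= hsC // -S1 //.
  by field; rewrite C0n0 sinn.
have cf (x : R) : 0 < x < pi -> {for x, continuous (fun v => sin v `^ (2 * n + 1))}.
  move=> hx.
  have [H _] := is_derive1_comp (is_derive1_powR (2 * n + 1) (sinp x hx)) (is_derive_sin x).
  exact/differentiable_continuous/derivable1_diffP.
have cH (x : R) : 0 < x < pi -> {for x, continuous (fun x => C0^-1 * w x)}.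
  move=> hx; have [H _] := dH x hx.
  exact/differentiable_continuous/derivable1_diffP.
have Ht (t : R) : 0 < t < pi ->
    Rintegral lebesgue_measure `[0, t] (fun v => sin v `^ (2 * n + 1)) =
    C0^-1 * w t - C0^-1 * W0.
  move=> /andP[t0 tpi]; rewrite /Rintegral.
  have f0 (x : R) : 0 < x < t -> 0 <= sin x `^ (2 * n + 1) by move=> _; exact: powR_ge0.
  have cf' (x : R) : 0 < x < t -> {for x, continuous (fun v => sin v `^ (2 * n + 1))}.
    by move=> /andP[x0 xt]; apply: cf; apply/andP; split; lra.
  have dH' (x : R) : 0 < x < t -> is_derive x 1 (fun x => C0^-1 * w x) (sin x `^ (2 * n + 1)).
    by move=> /andP[x0 xt]; apply: dH; apply/andP; split; lra.
  have la : C0^-1 * w x @[x --> (0:R)^'+] --> C0^-1 * W0 by exact: cvgM (cvg_cst _) W0lim.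
  have lb : C0^-1 * w x @[x --> t^'-] --> C0^-1 * w t.
    by apply: cvg_at_left_filter; apply: cH; apply/andP; split.
  by rewrite (@improper_FTC R _ _ 0 t _ _ t0 f0 cf' dH' la lb).
have Hpi : Rintegral lebesgue_measure `[0, pi] (fun v => sin v `^ (2 * n + 1)) =
    C0^-1 * Wpi - C0^-1 * W0.
  rewrite /Rintegral.
  have f0 (x : R) : 0 < x < pi -> 0 <= sin x `^ (2 * n + 1) by move=> _; exact: powR_ge0.
  have la : C0^-1 * w x @[x --> (0:R)^'+] --> C0^-1 * W0 by exact: cvgM (cvg_cst _) W0lim.
  have lb : C0^-1 * w x @[x --> (pi:R)^'-] --> C0^-1 * Wpi by exact: cvgM (cvg_cst _) Wpilim.
  by rewrite (@improper_FTC R _ _ 0 pi _ _ pi0 f0 cf dH la lb).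
have rI (t : R) : 0 < t < pi -> r t = (astigmatism r t + c / b) / m - w t * cos t.
  move=> ht; rewrite hs // r1E; field.
  by rewrite mn0.
have glim0 : (astigmatism r x + c / b) / m - w x * cos x @[x --> (0:R)^'+] -->
    (0 + c / b) / m - W0 * cos 0.
  apply: cvgB; first by apply: cvgM; [apply: cvgD => //; exact: cvg_cst | exact: cvg_cst].
  apply: cvgM => //; apply: cvg_at_right_filter; exact: continuous_cos.
have glimpi : (astigmatism r x + c / b) / m - w x * cos x @[x --> (pi:R)^'-] -->
    (0 + c / b) / m - Wpi * cos pi.
  apply: cvgB; first by apply: cvgM; [apply: cvgD => //; exact: cvg_cst | exact: cvg_cst].
  apply: cvgM => //; apply: cvg_at_left_filter; exact: continuous_cos.
exists C0, (c / (b * m)), (- W0); split.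
  by move=> t ht; exact: hsC.
move=> t ht.
case: (eqVneq t 0) => [-> | tn0].
  rewrite (@eq_at_right R r _ 0 pi _ pi0 (cr 0 h0) glim0 rI).
  rewrite set_itv1 Rintegral_set1 sin0 powR0 // cos0.
  by rewrite /W0; field; rewrite b0 mn0.
case: (eqVneq t pi) => [-> | tnpi].
  rewrite (@eq_at_left R r _ 0 pi _ pi0 (cr pi hpi) glimpi rI).
  rewrite Hpi sinpi powR0 // cospi.
  by rewrite /W0 /Wpi; field; rewrite b0 mn0 C0n0.
have hti := interior t ht tn0 tnpi.
rewrite rI // Ht // hsC //.
  by rewrite /W0 /S /m; field; rewrite C0n0 b0 andbT; exact: mn0.
Unshelve. all: by end_near. Qed.
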